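(* Let $G$ be a finite graph with maximum degree $\Delta \geq 2^{64}$, and let $r=\lceil 400\Delta/\log\Delta\rceil$. Then there exists a partition $V(G)=V_1\uplus\cdots\uplus V_r$ such that for every vertex $v\in V(G)$ and every $i\in[r]$, $|N_G(v)\cap V_i| \leq \frac12\log\Delta$.
   Context: $\log$ denotes the logarithm to base 2; $N_G(v)$ is the set of neighbours of $v$ in $G$; $[r]=\{1,\dots,r\}$. Parts of the partition are allowed to be empty. *)

(* Defs.v *)
From Stdlib Require Import Reals.
From mathcomp Require Import all_boot.
Set Implicit Arguments.
Unset Strict Implicit.

Definition log2 (x : R) : R := Rdiv (ln x) (ln (IZR 2)).

(* A finite simple graph is a symmetric irreflexive relation e on a finType T.
   N_G(v) = [set u | e v u]. *)
Definition nbhd (T : finType) (e : rel T) (v : T) : {set T} := [set u | e v u].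

Definition maxdeg (T : finType) (e : rel T) : nat := \max_(v : T) #|nbhd e v|.

(* Main.v *)
Require Import Defs.
From Stdlib Require Import Reals Lra Lia Psatz ZArith.
From mathcomp Require Import all_boot zify.
Set Implicit Arguments.
Unset Strict Implicit.
Unset Printing Implicit Defensive.

Lemma card_bigcup_le (T I : finType) (P : pred I) (F : I -> {set T}) :
  #|\bigcup_(i | P i) F i| <= \sum_(i | P i) #|F i|.
Proof.
elim: (index_enum I) => [|x s IH]; first by rewrite !big_nil cards0.
rewrite !big_cons; case: (P x) => //.
apply: leq_trans (leq_card_setU _ _) _; exact: leq_add.
Qed.

Section Indep.
Variables (I C : finType).
Notation Om := {ffun I -> C}.

Definition mixf (S : {set I}) (f g : Om) : Om := [ffun i => if i \in S then f i else g i].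

Definition depends (S : {set I}) (P : {set Om}) :=
  forall f g : Om, (forall i, i \in S -> f i = g i) -> (f \in P) = (g \in P).

Lemma indep (S : {set I}) (P Q : {set Om}) :
  depends S P -> depends (~: S) Q ->
  #|P :&: Q| * #|Om| = #|P| * #|Q|.
Proof.
move=> dP dQ.
pose phi (p : Om * Om) := (mixf S p.1 p.2, mixf S p.2 p.1).
have phiK : involutive phi.
  move=> [f g]; rewrite /phi /=; congr pair; apply/ffunP => i; rewrite !ffunE;
  by case: (i \in S).
have inj : injective phi by exact: inv_inj.
have -> : #|P| * #|Q| = #|[set p : Om * Om | (p.1 \in P) && (p.2 \in Q)]|.
  by rewrite -cardX; apply: eq_card => -[f g]; rewrite !inE.
rewrite -(card_imset [set p : Om * Om | (p.1 \in P) && (p.2 \in Q)] inj).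
have -> : #|P :&: Q| * #|Om| = #|[set p : Om * Om | (p.1 \in P :&: Q) && (p.2 \in [set: Om])]|.
  by rewrite -cardsT -cardX; apply: eq_card => -[f g]; rewrite !inE.
apply: eq_card => -[f g] /=.
have -> : ((f, g) \in [set phi x | x in [set p : Om * Om | (p.1 \in P) && (p.2 \in Q)]]) = (phi (f, g) \in [set p : Om * Om | (p.1 \in P) && (p.2 \in Q)]).
  apply/imsetP/idP => [[x xX ->]|H]; first by rewrite phiK.
  by exists (phi (f, g)) => //; rewrite phiK.
rewrite !inE /= andbT.
rewrite (dP (mixf S f g) f); last by move=> i iS; rewrite ffunE iS.
rewrite (dQ (mixf S g f) f) //; by move=> i; rewrite inE ffunE => /negbTE ->.
Qed.
End Indep.

Section LLL.
Variables (I C J : finType).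
Notation Om := {ffun I -> C}.
Variables (A : J -> {set Om}) (S : J -> {set I}) (q : nat).
Hypothesis hdep : forall j, depends (S j) (A j).
Hypothesis hA : forall j, q * #|A j| <= #|Om|.
Hypothesis hd : forall j, 4 * #|[set k | (k != j) && (S k :&: S j != set0)]| <= q.
Hypothesis hq : 4 <= q.
Hypothesis Cne : 0 < #|C|.

Definition Bs (K : {set J}) : {set Om} := [set f | [forall k in K, f \notin A k]].

Lemma Om_gt0 : 0 < #|Om|.
Proof. by rewrite card_ffun expn_gt0 Cne. Qed.

Lemma Bs_dep (K : {set J}) j : (forall k, k \in K -> S k :&: S j = set0) -> depends (~: S j) (Bs K).
Proof.
move=> H f g fg; rewrite !inE; apply: eq_forallb => k; case kK: (k \in K) => //=.
rewrite (hdep (g := g)) // => i ik; apply: fg; rewrite inE.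
apply/negP => ij; have := H k kK; move/setP/(_ i); by rewrite !inE ik ij.
Qed.

Lemma BsS (K K' : {set J}) : K' \subset K -> Bs K \subset Bs K'.
Proof.
move=> sub; apply/subsetP => f; rewrite !inE => /forallP H; apply/forallP => k.
apply/implyP => kK'; exact: (implyP (H k) (subsetP sub _ kK')).
Qed.

Lemma indep_case (K : {set J}) j : (forall k, k \in K -> S k :&: S j = set0) ->
  q * #|A j :&: Bs K| <= #|Bs K|.
Proof.
move=> H; have E := indep (@hdep j) (Bs_dep H).
rewrite -(leq_pmul2r Om_gt0) -mulnA E mulnA [#|Bs K| * _]mulnC.
exact: leq_mul (hA j) (leqnn _).
Qed.

Lemma step (K : {set J}) j
  (IHK : forall K' : {set J}, #|K'| < #|K| -> forall j', j' \notin K' ->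
          q * #|A j' :&: Bs K'| <= 2 * #|Bs K'|) :
  j \notin K -> q * #|A j :&: Bs K| <= 2 * #|Bs K|.
Proof.
move=> jK.
pose K1 := [set k in K | S k :&: S j != set0].
pose K2 := K :\: K1.
have hK2 : forall k, k \in K2 -> S k :&: S j = set0.
  by move=> k; rewrite !inE => /andP [H kK]; move: H; rewrite kK /= negbK => /eqP.
have i2 := indep_case hK2.
have sub : Bs K \subset Bs K2 by apply: BsS; exact: subsetDl.
have key : #|Bs K2| <= 2 * #|Bs K|.
  case: (eqVneq K1 set0) => [K10|K1n0].
    by rewrite /K2 K10 setD0 leq_pmull.
  have ltK : #|K2| < #|K|.
    rewrite /K2 cardsD.
    have sK1 : K1 \subset K by apply/subsetP => x; rewrite inE => /andP [].
    rewrite (setIidPr sK1).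
    have : 0 < #|K1| by rewrite card_gt0 K1n0.
    have : #|K1| <= #|K| by exact: subset_leq_card.
    lia.
  have hk : forall k, k \in K1 -> q * #|A k :&: Bs K2| <= 2 * #|Bs K2|.
    move=> k kK1; apply: IHK => //; by rewrite inE kK1.
  have cov : Bs K2 \subset Bs K :|: \bigcup_(k in K1) (A k :&: Bs K2).
    apply/subsetP => f fB2; rewrite inE; case fB: (f \in Bs K) => //=.
    move: fB; rewrite inE => /negbT; rewrite negb_forall => /existsP [k].
    rewrite negb_imply negbK => /andP [kK fA].
    have kK1 : k \in K1.
      apply: contraT => kK1; move: fB2; rewrite inE => /forallP/(_ k).
      by rewrite inE kK kK1 fA.
    by apply/bigcupP; exists k => //; rewrite inE fA.
  have c1 := subset_leq_card cov.
  have c2 : #|Bs K :|: \bigcup_(k in K1) (A k :&: Bs K2)| <= #|Bs K| + #|\bigcup_(k in K1) (A k :&: Bs K2)|.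
    by case: (leq_card_setU (Bs K) (\bigcup_(k in K1) (A k :&: Bs K2))).
  have c3 := card_bigcup_le (mem K1) (fun k => A k :&: Bs K2).
  have c4 : q * (\sum_(k in K1) #|A k :&: Bs K2|) <= #|K1| * (2 * #|Bs K2|).
    rewrite big_distrr /= -sum_nat_const; exact: leq_sum.
  have c5 : #|K1| <= #|[set k | (k != j) && (S k :&: S j != set0)]|.
    apply: subset_leq_card; apply/subsetP => k; rewrite !inE => /andP [kK ->].
    by rewrite andbT; apply: contraNneq jK => <-.
  have c6 := hd j.
  move: c1 c2 c3 c4 c5 c6.
  set b2 := #|Bs K2|; set b := #|Bs K|; set s := \sum_(k in K1) _.
  set U := #|\bigcup_(k in K1) _|; set k1 := #|K1|; set dj := #|[set k | (k != j) && (S k :&: S j != set0)]|.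
  move=> c1 c2 c3 c4 c5 c6.
  have h1 : b2 <= b + s by lia.
  have h2 : q * b2 <= q * b + k1 * (2 * b2).
    by apply: leq_trans (leq_mul (leqnn q) h1) _; rewrite mulnDr leq_add2l.
  have h3 : k1 * (2 * b2) <= dj * (2 * b2) by apply: leq_mul.
  have h4 : 4 * dj * b2 <= q * b2 by apply: leq_mul.
  have q0 : 0 < q by lia.
  rewrite -(leq_pmul2l q0).
  have e1 : 4 * dj * b2 = 2 * (dj * (2 * b2)) by nia.
  have e2 : q * (2 * b) = 2 * (q * b) by nia.
  move: h2 h3 h4; rewrite e1 e2.
  move: (q * b2) (q * b) (k1 * (2 * b2)) (dj * (2 * b2)) => x y z w; lia.
apply: leq_trans key.
apply: leq_trans i2; rewrite leq_mul2l; apply/orP; right.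
apply: subset_leq_card; exact: setIS.
Qed.

Lemma claim n : forall K : {set J}, #|K| <= n -> forall j, j \notin K ->
  q * #|A j :&: Bs K| <= 2 * #|Bs K|.
Proof.
elim: n => [|n IH] K cK j jK; apply: step => // K' lt.
- by move: (leq_trans lt cK).
- apply: IH; by rewrite -ltnS (leq_trans lt cK).
Qed.

Lemma Bs_pos n : forall K : {set J}, #|K| = n -> 0 < #|Bs K|.
Proof.
elim: n => [|n IH] K cK.
  move/eqP: cK; rewrite cards_eq0 => /eqP ->.
  have -> : Bs set0 = setT by apply/setP => f; rewrite !inE; apply/forallP => k; rewrite inE.
  by rewrite cardsT Om_gt0.
have : 0 < #|K| by rewrite cK.
rewrite card_gt0 => /set0Pn [j jK].
pose K' := K :\ j.
have cK' : #|K'| = n by move: cK; rewrite (cardsD1 j K) jK add1n => -[].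
have jK' : j \notin K' by rewrite !inE eqxx.
have h := claim (leqnn #|K'|) jK'.
have pos := IH K' cK'.
have E : Bs K = Bs K' :\: A j.
  apply/setP => f; rewrite !inE.
  apply/forallP/andP => [H|[fA /forallP H] k].
    split.
      by have := H j; rewrite jK.
    apply/forallP => k; rewrite !inE; apply/implyP => /andP [_ kK].
    exact: (implyP (H k) kK).
  apply/implyP => kK; case: (eqVneq k j) => [->//|kj].
  by have := H k; rewrite !inE kj kK.
rewrite E cardsD setIC.
move: h pos; set x := #|A j :&: Bs K'|; set y := #|Bs K'| => h pos.
have : 4 * x <= 2 * y by apply: leq_trans h; apply: leq_mul.
lia.
Qed.

Theorem LLL_exists : exists f : Om, forall j, f \notin A j.
Proof.
have := Bs_pos (erefl #|[set: J]|); rewrite card_gt0 => /set0Pn [f].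
rewrite inE => /forallP H; exists f => j; have := H j; by rewrite inE.
Qed.

End LLL.
Lemma card_const_on (T C : finType) (X : {set T}) (c : C) :
  #|[set f : {ffun T -> C} | [forall x in X, f x == c]]| * #|C| ^ #|X| = #|C| ^ #|T|.
Proof.
pose F := fun x : T => if x \in X then pred1 c else predT.
have -> : [set f : {ffun T -> C} | [forall x in X, f x == c]] = [set f in family F].
  apply/setP => f; rewrite !inE; apply/forallP/familyP => H x; have := H x;
  rewrite /F; case: (x \in X) => //=.
rewrite cardsE card_family foldrE big_map big_enum /=.
have -> : \prod_(x in T) #|F x| = \prod_(x in [predC X]) #|C|.
  rewrite big_mkcond /= [RHS]big_mkcond /=; apply: eq_bigr => x _.
  rewrite /F !inE; case: (x \in X) => /=; first by rewrite card1.
  by rewrite cardT.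
rewrite prod_nat_const -expnD addnC cardC //.
Qed.

Section Graph.
Variables (T : finType) (e : rel T).
Hypothesis e_sym : symmetric e.
Variables (r m : nat).
Hypothesis r_pos : 0 < r.
Notation D := (maxdeg e).
Notation Om := {ffun T -> 'I_r}.

Definition Abad (v : T) : {set Om} :=
  [set f : Om | [exists i : 'I_r, m <= #|nbhd e v :&: [set u | f u == i]|]].

Lemma deg_le v : #|nbhd e v| <= D.
Proof. exact: (leq_bigmax (F := fun v => #|nbhd e v|)). Qed.

Lemma Abad_dep v : depends (nbhd e v) (Abad v).
Proof.
move=> f g fg; rewrite !inE; apply: eq_existsb => i.
congr (m <= _); apply: eq_card => u; rewrite !inE.
case uv: (e v u) => //=; by rewrite fg // inE.
Qed.

Lemma dep_card v : #|[set w | (w != v) && (nbhd e w :&: nbhd e v != set0)]| <= D * D.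
Proof.
have sub : [set w | (w != v) && (nbhd e w :&: nbhd e v != set0)] \subset
           \bigcup_(u | u \in nbhd e v) nbhd e u.
  apply/subsetP => w; rewrite inE => /andP [_ /set0Pn [u]].
  rewrite !inE => /andP [wu vu]; apply/bigcupP; exists u; first by rewrite inE.
  by rewrite inE e_sym.
apply: leq_trans (subset_leq_card sub) _.
apply: leq_trans (card_bigcup_le _ _) _.
apply: (@leq_trans (\sum_(i in nbhd e v) D)); first by apply: leq_sum => u _; exact: deg_le.
by rewrite sum_nat_const leq_mul2r deg_le orbT.
Qed.

Lemma Abad_card v : #|Abad v| * r ^ m <= r * 'C(D, m) * r ^ #|T|.
Proof.
pose Xs := [set X : {set T} | (X \subset nbhd e v) && (#|X| == m)].
pose F := fun (i : 'I_r) (X : {set T}) => [set f : Om | [forall x in X, f x == i]].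
have sub : Abad v \subset \bigcup_(i | true) \bigcup_(X | X \in Xs) F i X.
  apply/subsetP => f; rewrite inE => /existsP [i Hi].
  have : 0 < #|[set X : {set T} | X \subset nbhd e v :&: [set u | f u == i] & #|X| == m]|.
    by rewrite cards_draws bin_gt0.
  rewrite card_gt0 => /set0Pn [X]; rewrite inE => /andP [sX cX].
  apply/bigcupP; exists i => //; apply/bigcupP; exists X.
    rewrite inE cX andbT; apply: subset_trans sX _; exact: subsetIl.
  rewrite inE; apply/forallP => x; apply/implyP => xX.
  by have := subsetP sX x xX; rewrite !inE => /andP [].
have c1 := subset_leq_card sub.
have c2 := card_bigcup_le (fun _ => true) (fun i => \bigcup_(X | X \in Xs) F i X).
have cXs : #|Xs| <= 'C(D, m).
  rewrite cards_draws; apply: leq_bin2l; exact: deg_le.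
have h : forall i, #|\bigcup_(X | X \in Xs) F i X| * r ^ m <= 'C(D, m) * r ^ #|T|.
  move=> i; apply: leq_trans (leq_mul (card_bigcup_le _ _) (leqnn _)) _.
  rewrite big_distrl /=.
  apply: (@leq_trans (\sum_(X in Xs) r ^ #|T|)).
    apply: leq_sum => X; rewrite inE => /andP [_ /eqP cX].
    have E := card_const_on X i; rewrite !card_ord in E; by rewrite -cX E.
  by rewrite sum_nat_const leq_mul2r cXs orbT.
apply: leq_trans (leq_mul (leq_trans c1 c2) (leqnn _)) _.
rewrite big_distrl /=.
apply: (@leq_trans (\sum_(i : 'I_r | true) 'C(D, m) * r ^ #|T|)).
  by apply: leq_sum => i _; exact: h.
by rewrite sum_nat_const card_ord mulnA.
Qed.

Lemma graph_part :
  4 * (D * D + 1) * 'C(D, m) * r <= r ^ m ->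
  exists f : Om, forall v (i : 'I_r), #|nbhd e v :&: [set u | f u == i]| < m.
Proof.
move=> Hnum.
have Cne : 0 < #|'I_r| by rewrite card_ord.
have hA : forall v, 4 * (D * D + 1) * #|Abad v| <= #|Om|.
  move=> v; rewrite card_ffun card_ord.
  have rm : 0 < r ^ m by rewrite expn_gt0 r_pos.
  rewrite -(leq_pmul2r rm) -mulnA.
  apply: leq_trans (leq_mul (leqnn _) (Abad_card v)) _.
  rewrite mulnC [r ^ #|T| * _]mulnC.
  have := leq_mul Hnum (leqnn (r ^ #|T|)).
  move: (r ^ #|T|) (r ^ m) ('C(D, m)) => a b c.
  suff -> : r * c * a * (4 * (D * D + 1)) = 4 * (D * D + 1) * c * r * a by [].
  nia.
have hd : forall v, 4 * #|[set w | (w != v) && (nbhd e w :&: nbhd e v != set0)]| <= 4 * (D * D + 1).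
  by move=> v; rewrite leq_mul2l; apply/orP; right; apply: leq_trans (dep_card v) _; rewrite addn1.
have hq : 4 <= 4 * (D * D + 1) by rewrite -{1}(muln1 4) leq_mul2l addn1.
have [f Hf] := LLL_exists (@Abad_dep) hA hd hq Cne.
exists f => v i; have := Hf v; rewrite inE negb_exists => /forallP /(_ i).
by rewrite -ltnNge.
Qed.
End Graph.

Local Open Scope R_scope.
Lemma e_bound : exp 1 <= 2.767.
Proof.
have h1 : exp (-(1/32)) >= 1 - 1/32 by have := exp_ineq1_le (-(1/32)); lra.
have h2 : exp (1/32) * exp (-(1/32)) = 1 by rewrite <- exp_plus; replace (1/32 + - (1/32)) with 0 by lra; apply exp_0.
have hp : 0 < exp (1/32) by apply exp_pos.
have a1 : exp (1/32) <= 1.03226 by nra.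
have e2 : exp (2/32) = exp (1/32) * exp (1/32) by rewrite <- exp_plus; f_equal; lra.
have e4 : exp (4/32) = exp (2/32) * exp (2/32) by rewrite <- exp_plus; f_equal; lra.
have e8 : exp (8/32) = exp (4/32) * exp (4/32) by rewrite <- exp_plus; f_equal; lra.
have e16 : exp (16/32) = exp (8/32) * exp (8/32) by rewrite <- exp_plus; f_equal; lra.
have e32 : exp 1 = exp (16/32) * exp (16/32) by rewrite <- exp_plus; f_equal; lra.
have a2 : exp (2/32) <= 1.0656 by rewrite e2; nra.
have p2 : 0 < exp (2/32) by apply exp_pos.
have a4 : exp (4/32) <= 1.1356 by rewrite e4; nra.
have p4 : 0 < exp (4/32) by apply exp_pos.
have a8 : exp (8/32) <= 1.2897 by rewrite e8; nra.
have p8 : 0 < exp (8/32) by apply exp_pos.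
have a16 : exp (16/32) <= 1.6634 by rewrite e16; nra.
have p16 : 0 < exp (16/32) by apply exp_pos.
rewrite e32; nra.
Qed.

Lemma base_num : 512 * 177.1 ^ 32 <= 200 ^ 32 * 33.
Proof.
have E : forall x, x ^ 32 = ((((x*x)*(x*x))*((x*x)*(x*x)))*(((x*x)*(x*x))*((x*x)*(x*x)))) * ((((x*x)*(x*x))*((x*x)*(x*x)))*(((x*x)*(x*x))*((x*x)*(x*x)))).
  intro x; simpl; ring.
assert (H : 177.1 ^ 32 <= 0.0206 * 200 ^ 32).
{ replace 177.1 with (0.8855 * 200) by lra.
  rewrite Rpow_mult_distr.
  have hp : 0 < 200 ^ 32 by apply pow_lt; lra.
  apply Rmult_le_compat_r; [lra|].
  rewrite E.
  set x := 0.8855.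
  assert (x2 : 0 <= x * x <= 0.7842) by (unfold x; lra).
  assert (x4 : 0 <= (x * x) * (x * x) <= 0.615) by nra.
  assert (x8 : 0 <= ((x * x) * (x * x)) * ((x * x) * (x * x)) <= 0.3783) by nra.
  assert (x16 : 0 <= (((x * x) * (x * x)) * ((x * x) * (x * x))) * (((x * x) * (x * x)) * ((x * x) * (x * x))) <= 0.1432) by nra.
  nra. }
have hp : 0 < 200 ^ 32 by apply pow_lt; lra.
nra.
Qed.

Lemma powS (x : R) (n : nat) : x ^ n.+1 = x * x ^ n.
Proof. by []. Qed.

Lemma num_k (k : nat) : (32 <= k)%nat -> 512 * 177.1 ^ k <= 200 ^ k * INR (k + 1).
Proof.
move=> hk; have [j ->] : exists j, k = (32 + j)%nat by exists (k - 32)%nat; lia.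
elim: j => [|j IH].
  rewrite addn0; have -> : INR (32 + 1) = 33 by rewrite plus_INR; simpl; lra.
  exact: base_num.
have -> : (32 + j.+1 = (32 + j).+1)%nat by lia.
set k' := (32 + j)%nat in IH *.
clearbody k'. rewrite !powS.
have -> : (k'.+1 + 1 = (k' + 1).+1)%nat by lia.
rewrite S_INR.
have h0 : 0 <= 177.1 ^ k' by apply pow_le; lra.
have h1 : 0 <= 200 ^ k' by apply pow_le; lra.
have h2 : 0 <= INR (k' + 1) by apply pos_INR.
nra.
Qed.

Lemma exp_pow_n (x : R) (n : nat) : exp x ^ n = exp (INR n * x).
Proof.
elim: n => [|n IH]; first by simpl; rewrite Rmult_0_l exp_0.
rewrite powS IH S_INR -exp_plus; f_equal; ring.
Qed.

Lemma e_pow (n : nat) : (0 < n)%nat -> (INR n + 1) ^ n <= exp 1 * INR n ^ n.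
Proof.
move=> hn.
have np : 0 < INR n by apply lt_0_INR; lia.
have h1 : 1 + 1 / INR n <= exp (1 / INR n) by apply exp_ineq1_le.
have h2 : (1 + 1 / INR n) ^ n <= exp (1 / INR n) ^ n.
  apply pow_incr; split; last exact h1.
  have : 0 < 1 / INR n by apply Rdiv_lt_0_compat; lra.
  lra.
rewrite exp_pow_n in h2.
have -> : INR n + 1 = (1 + 1 / INR n) * INR n by field; lra.
rewrite Rpow_mult_distr.
have : 0 < INR n ^ n by apply pow_lt.
replace (INR n * (1 / INR n)) with 1 in h2 by (field; lra).
nra.
Qed.

Lemma fact_bound (n : nat) : INR n.+1 ^ n.+1 <= INR (n.+1)`! * exp 1 ^ n.
Proof.
elim: n => [|n IH]; first by rewrite /= !Rmult_1_r; lra.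
rewrite factS -multE mult_INR (S_INR n.+1) powS (powS (exp 1) n).
have h := @e_pow n.+1 isT.
set X := INR n.+1 in IH h *.
have X0 : 0 < X by apply lt_0_INR; lia.
have e0 : 0 < exp 1 by apply exp_pos.
have p0 : 0 < (X + 1) ^ n.+1 by apply pow_lt; lra.
have p1 : 0 < X ^ n.+1 by apply pow_lt; lra.
have p2 : 0 < exp 1 ^ n by apply pow_lt; lra.
have f0 : 0 <= INR (n.+1)`! by apply pos_INR.
have h2 : (X + 1) ^ n.+1 <= exp 1 * (INR (n.+1)`! * exp 1 ^ n).
  apply: Rle_trans h _; apply Rmult_le_compat_l; lra.
have : (X + 1) * (X + 1) ^ n.+1 <= (X + 1) * (exp 1 * (INR (n.+1)`! * exp 1 ^ n)).
  apply Rmult_le_compat_l; lra.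
move=> H; apply: Rle_trans H _; right; ring.
Qed.

Lemma num_main (d R C F : R) (k : nat) :
  1 <= d -> 0 < R -> (32 <= k)%nat -> d < 4 * 4 ^ k ->
  200 * d < R * (INR k + 1) -> 0 <= C -> C * F <= d ^ k.+1 ->
  (INR k + 1) ^ k.+1 <= F * exp 1 ^ k -> 0 < F ->
  4 * (d * d + 1) * C * R <= R ^ k.+1.
Proof.
move=> d1 R0 k32 dlt Rm C0 CF fb F0.
set M := INR k + 1 in Rm fb *.
have M0 : 0 < M by rewrite /M; have := pos_INR k; lra.
have f1 : 200 ^ k * d ^ k <= R ^ k * M ^ k.
  rewrite -!Rpow_mult_distr; apply pow_incr; lra.
have f2 : d * d * d < 64 * 64 ^ k.
  have -> : 64 ^ k = 4 ^ k * 4 ^ k * 4 ^ k.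
    by rewrite -!Rpow_mult_distr; f_equal; lra.
  have : 0 < 4 ^ k by apply pow_lt; lra.
  move: dlt; move: (4 ^ k) => a dlt h.
  have h1 : d * d < (4 * a) * (4 * a) by nra.
  have h2 : d * d * d < (4 * a) * (4 * a) * (4 * a) by nra.
  nra.
have e1 := e_bound.
have e0 : 0 < exp 1 by apply exp_pos.
have f3 : 64 ^ k * exp 1 ^ k <= 177.1 ^ k.
  rewrite -Rpow_mult_distr; apply pow_incr; lra.
have f4 : 512 * 177.1 ^ k <= 200 ^ k * M.
  have := num_k k32; rewrite addn1 S_INR => h; exact h.
rewrite powS in CF; rewrite powS in fb; rewrite powS.
have Mk0 : 0 < M ^ k by apply pow_lt.
have dk0 : 0 < d ^ k by apply pow_lt; lra.
have Rk0 : 0 < R ^ k by apply pow_lt.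
have s0 : 0 < 64 ^ k by apply pow_lt; lra.
have t0 : 0 < 177.1 ^ k by apply pow_lt; lra.
have u0 : 0 < 200 ^ k by apply pow_lt; lra.
have Ek0 : 0 < exp 1 ^ k by apply pow_lt; lra.
move: f1 f2 f3 f4 CF fb Mk0 dk0 Rk0 s0 t0 u0 Ek0.
move: (M ^ k) (d ^ k) (R ^ k) (64 ^ k) (177.1 ^ k) (200 ^ k) (exp 1 ^ k).
move=> Mk dk Rk s t u Ek f1 f2 f3 f4 CF fb Mk0 dk0 Rk0 s0 t0 u0 Ek0.
set P := 4 * (d * d + 1) * d.
have g1 : P < 512 * s by rewrite /P; nra.
have g2a : P * Mk * M <= 512 * s * Mk * M.
  apply Rmult_le_compat_r; [lra|]; apply Rmult_le_compat_r; lra.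
have g2b : 512 * s * Mk * M <= 512 * s * (F * Ek).
  have -> : 512 * s * Mk * M = 512 * s * (M * Mk) by ring.
  apply Rmult_le_compat_l; lra.
have g2c : 512 * s * (F * Ek) <= 512 * t * F.
  have -> : 512 * s * (F * Ek) = (512 * F) * (s * Ek) by ring.
  have -> : 512 * t * F = (512 * F) * t by ring.
  apply Rmult_le_compat_l; lra.
have g2d : 512 * t * F <= u * M * F by apply Rmult_le_compat_r; lra.
have g2 : P * Mk <= u * F.
  have : P * Mk * M <= u * F * M by lra.
  move=> h; apply (Rmult_le_reg_r M); lra.
have g3 : 4 * (d * d + 1) * C * R * (F * Mk) <= R * Rk * (F * Mk).
  have -> : 4 * (d * d + 1) * C * R * (F * Mk) = (4 * (d * d + 1) * R * Mk) * (C * F) by ring.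
  apply: Rle_trans (_ : _ <= (4 * (d * d + 1) * R * Mk) * (d * dk)) _.
    apply Rmult_le_compat_l; [|lra].
    have : 0 <= d * d by nra. move=> h; repeat apply Rmult_le_pos; lra.
  have -> : 4 * (d * d + 1) * R * Mk * (d * dk) = (R * dk) * (P * Mk) by rewrite /P; ring.
  apply: Rle_trans (_ : _ <= (R * dk) * (u * F)) _.
    apply Rmult_le_compat_l; nra.
  have -> : R * dk * (u * F) = (R * F) * (u * dk) by ring.
  have -> : R * Rk * (F * Mk) = (R * F) * (Rk * Mk) by ring.
  apply Rmult_le_compat_l; [nra|]; lra.
apply (Rmult_le_reg_r (F * Mk)); [nra|exact g3].
Qed.

Lemma INR_expn (m n : nat) : INR (m ^ n)%N = INR m ^ n.
Proof.
elim: n => [|n IH]; first by rewrite expn0.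
by rewrite expnS -multE mult_INR IH powS.
Qed.

Lemma ffact_le_exp (n m : nat) : (n ^_ m <= n ^ m)%N.
Proof.
elim: m => [|m IH]; first by rewrite ffactn0 expn0.
rewrite ffactnSr expnS mulnC; apply: leq_mul => //; exact: leq_subr.
Qed.

Lemma ln_le_mono (x y : R) : 0 < x -> x <= y -> ln x <= ln y.
Proof.
move=> x0 [h|->]; last by right.
left; apply ln_increasing => //.
Qed.

Unset Implicit Arguments.
Set Strict Implicit.

Theorem lemma3 (T : finType) (e : rel T) (e_sym : symmetric e)
  (e_irr : irreflexive e) (r : nat) :
  (2 ^ 64 <= maxdeg e)%N ->
  (INR r - 1 < 400 * INR (maxdeg e) / log2 (INR (maxdeg e)) <= INR r)%R ->
  exists f : T -> 'I_r,
    forall (v : T) (i : 'I_r),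
      (INR #|nbhd e v :&: [set u | f u == i]| <= / 2 * log2 (INR (maxdeg e)))%R.
Proof.
move=> hD [_ hr].
set D := maxdeg e in hD hr *.
set d := INR D in hr *.
set L := log2 d in hr *.
have d64 : 2 ^ 64 <= d by rewrite /d -(INR_expn 2 64); apply le_INR; apply/leP.
have d1 : 1 <= d.
  have : 1 <= 2 ^ 64 by apply pow_R1_Rle; lra.
  lra.
have ln2 : 0 < ln 2 by rewrite -ln_1; apply ln_increasing; lra.
have hL : L * ln 2 = ln d by rewrite /L /log2; field; lra.
have L64 : 64 <= L.
  have : ln (2 ^ 64) <= ln d by apply ln_le_mono => //; apply pow_lt; lra.
  rewrite ln_pow; last lra.
  have -> : INR 64 = 64 by rewrite INR_IZR_INZ.
  rewrite -hL => h; apply (Rmult_le_reg_r (ln 2)) => //.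
have [z1 z2] := archimed (L / 2).
set z := up (L / 2) in z1 z2.
have z33 : (33 <= z)%Z.
  have : 32 < IZR z by lra.
  move/lt_IZR; lia.
set k := Z.to_nat (z - 1).
have kE : INR k = IZR z - 1.
  rewrite /k INR_IZR_INZ Z2Nat.id; last lia.
  by rewrite minus_IZR.
have k32 : (32 <= k)%N by apply/leP; rewrite /k; lia.
have kL1 : INR k <= L / 2 by lra.
have kL2 : L / 2 < INR k + 1 by lra.
have Lp : 0 < L by lra.
have qpos : 0 < 400 * d / L by apply Rdiv_lt_0_compat; lra.
have R0 : 0 < INR r by lra.
have r0 : (0 < r)%N.
  case: r R0 {hr} => [|r'] //=; rewrite /= => h; lra.
have dlt : d < 4 * 4 ^ k.
  have -> : 4 * 4 ^ k = 2 ^ (2 * k.+1).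
    rewrite -multE pow_mult; have -> : 2 ^ 2 = 4 by rewrite /=; lra.
    by rewrite powS.
  apply ln_lt_inv; [lra| apply pow_lt; lra|].
  rewrite ln_pow; last lra.
  rewrite -hL mult_INR S_INR.
  have -> : INR 1 = 1 by []. rewrite (S_INR k).
  apply Rmult_lt_compat_r => //; lra.
have Rm : 200 * d < INR r * (INR k + 1).
  have h1 : 400 * d <= INR r * L.
    have : 400 * d / L * L <= INR r * L by apply Rmult_le_compat_r; lra.
    have -> : 400 * d / L * L = 400 * d by field; lra.
    done.
  have h2 : INR r * L < INR r * (2 * (INR k + 1)) by apply Rmult_lt_compat_l; lra.
  lra.
set C := INR 'C(D, k.+1).
set F := INR (k.+1)`!.
have C0 : 0 <= C by apply pos_INR.
have F0 : 0 < F by apply lt_0_INR; apply/ltP; exact: fact_gt0.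
have CF : C * F <= d ^ k.+1.
  rewrite /C /F -mult_INR multE bin_ffact /d -INR_expn.
  apply le_INR; apply/leP; exact: ffact_le_exp.
have fb : (INR k + 1) ^ k.+1 <= F * exp 1 ^ k by rewrite -S_INR; exact: fact_bound.
have key := num_main d1 R0 k32 dlt Rm C0 CF fb F0.
have Hnum : (4 * (D * D + 1) * 'C(D, k.+1) * r <= r ^ k.+1)%N.
  apply/leP; apply INR_le.
  rewrite INR_expn -!multE !mult_INR -plusE plus_INR.
  have -> : INR 4 = 4 by rewrite INR_IZR_INZ.
  have -> : INR 1 = 1 by [].
  rewrite mult_INR; exact key.
have [f Hf] := graph_part e_sym r0 Hnum.
exists (fun u => f u) => v i.
have h := Hf v i.
have : INR #|nbhd e v :&: [set u | f u == i]| <= INR k.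
  apply le_INR; apply/leP; by rewrite -ltnS.
rewrite /L in kL1; lra.
Qed.
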